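(* For every $\alpha\in(0,\pi/2]$, the system of two equations in the real unknowns $(d,u_1)$ $$3(1+\cos\alpha)d^2+8\cos\Big(\frac{\alpha}{2}\Big)d\,u_1+6u_1^2-10(1+\alpha\csc\alpha)=0,$$ $$4d^6-24d^4+57d^2-12\sec\Big(\frac{\alpha}{2}\Big)d(d^2-3)u_1+9\sec^2\Big(\frac{\alpha}{2}\Big)u_1^2+105\csc^2\Big(\frac{\alpha}{2}\Big)\big(1-\alpha\csc\alpha\big)=0$$ has at least two real solutions with $d>0$.
   Context: Here $\csc=1/\sin$ and $\sec=1/\cos$. The system describes (in the symmetric case $u_1=u_2$, $v_2=-v_1$) the degree-7 Pythagorean-hodograph curves interpolating the end points, tangent directions, curvatures and arc length of a circular arc of inner angle $2\alpha$ in canonical position. *)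

(* Defs.v *)
From Stdlib Require Import Reals.
Open Scope R_scope.

Definition csc (x : R) : R := / sin x.
Definition sec (x : R) : R := / cos x.

Definition eq1 (alpha d u1 : R) : R :=
  3 * (1 + cos alpha) * d ^ 2 + 8 * cos (alpha / 2) * d * u1 + 6 * u1 ^ 2
  - 10 * (1 + alpha * csc alpha).

Definition eq2 (alpha d u1 : R) : R :=
  4 * d ^ 6 - 24 * d ^ 4 + 57 * d ^ 2
  - 12 * sec (alpha / 2) * d * (d ^ 2 - 3) * u1
  + 9 * (sec (alpha / 2)) ^ 2 * u1 ^ 2
  + 105 * (csc (alpha / 2)) ^ 2 * (1 - alpha * csc alpha).

Definition is_solution (alpha d u1 : R) : Prop :=
  eq1 alpha d u1 = 0 /\ eq2 alpha d u1 = 0.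

(* Main.v *)
Require Import Defs.
From Stdlib Require Import Reals.
Open Scope R_scope.
From Stdlib Require Import Lra Psatz Arith Factorial.
Open Scope R_scope.

Lemma INR_fact_S n : INR (fact (S n)) = INR (S n) * INR (fact n).
Proof. rewrite fact_simpl, mult_INR. reflexivity. Qed.
Ltac fsimp := repeat rewrite INR_fact_S; simpl INR; simpl pow.

Lemma sin_ub_eq a : sin_ub a = a - a^3/6 + a^5/120 - a^7/5040 + a^9/362880.
Proof. unfold sin_ub, sin_approx, sin_term. cbn [sum_f_R0 Nat.mul Nat.add].
 fsimp. field. Qed.
Lemma sin_lb_eq a : sin_lb a = a - a^3/6 + a^5/120 - a^7/5040.
Proof. unfold sin_lb, sin_approx, sin_term. cbn [sum_f_R0 Nat.mul Nat.add].
 fsimp. field. Qed.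
Lemma cos_ub_eq a : cos_ub a = 1 - a^2/2 + a^4/24 - a^6/720 + a^8/40320.
Proof. unfold cos_ub, cos_approx, cos_term. cbn [sum_f_R0 Nat.mul Nat.add].
 fsimp. field. Qed.
Lemma cos_lb_eq a : cos_lb a = 1 - a^2/2 + a^4/24 - a^6/720.
Proof. unfold cos_lb, cos_approx, cos_term. cbn [sum_f_R0 Nat.mul Nat.add].
 fsimp. field. Qed.
Lemma ypoly y : 5/2 < y -> y <= 4 -> 1 - y/2 + y^2/24 - y^3/720 + y^4/40320 < 0.
Proof. intros. nra. Qed.
Lemma q1 y : 0 <= y -> y <= 5/2 -> 0 < 1/120 + y/240 - 53*y^2/51840 + 49*y^3/518400 - 49*y^4/10368000 + y^5/7776000 - y^6/622080000.
Proof. intros. assert (0 <= y^2) by nra. assert (0<=y^3) by nra. assert (0 <= y^5) by nra. nra. Qed.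
Lemma q3 y : 0 <= y -> y <= 5/2 -> 0 < 2/15 - y/15 + 23*y^2/3150 - 17*y^3/40320 + 29*y^4/2016000 - y^5/3456000 + y^6/338688000.
Proof. intros. assert (0 <= y^2) by nra. assert (0<=y^3) by nra. assert (0 <= y^4) by nra. assert (0 <= y^6) by nra. nra. Qed.

Lemma taylor x : 0 < x <= PI/2 ->
  x^2 <= 5/2 /\ 0 < sin x /\ 0 <= cos x /\
  sin x * (1 - cos x)/3 + sin x * (1 - cos x)^2/10 <= x - sin x /\
  x - sin x <= 3/5 * sin x * (1 - cos x).
Proof.
  intros [H0 H1].
  assert (HP4 := PI_4).
  assert (HS : 0 < sin x) by (apply sin_gt_0; lra).
  assert (HC : 0 <= cos x) by (apply cos_ge_0; lra).
  destruct (SIN x) as [Sl Su]; try lra.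
  destruct (COS x) as [Cl Cu]; try lra.
  rewrite sin_ub_eq in Su. rewrite sin_lb_eq in Sl.
  rewrite cos_ub_eq in Cu. rewrite cos_lb_eq in Cl.
  assert (Hx2 : x^2 <= 5/2).
  { destruct (Rle_or_lt (x^2) (5/2)) as [h|h]; auto.
    assert (h4 : x^2 <= 4) by nra.
    pose proof (ypoly (x^2) h h4). exfalso.
    assert (E: 1 - x^2/2 + (x^2)^2/24 - (x^2)^3/720 + (x^2)^4/40320 = 1 - x ^ 2 / 2 + x ^ 4 / 24 - x ^ 6 / 720 + x ^ 8 / 40320) by field.
    lra. }
  assert (Hy0 : 0 <= x^2) by nra.
  assert (Hx5 : 0 < x^5) by (apply pow_lt; lra).
  assert (Hx3 : 0 < x^3) by (apply pow_lt; lra).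
  set (S := sin x) in *. set (C := cos x) in *.
  split; [exact Hx2|split; [exact HS|split; [exact HC|split]]].
  - set (su := x - x^3/6 + x^5/120).
    set (gu := x^2/2 - x^4/24 + x^6/720).
    assert (HSu : S <= su).
    { unfold su. assert (x^9/362880 <= x^7/5040).
      { assert (0 <= x^7) by (apply pow_le; lra).
        replace (x^9) with (x^7 * x^2) by field. nra. }
      lra. }
    assert (Hg : 1 - C <= gu) by (unfold gu; lra).
    assert (Hg0 : 0 <= 1 - C).
    { pose proof (COS_bound x). unfold C; lra. }
    assert (HA : (1-C)/3 + (1-C)^2/10 <= gu/3 + gu^2/10) by nra.
    assert (HB : S * ((1-C)/3 + (1-C)^2/10) <= su * (gu/3 + gu^2/10)).
    { apply Rmult_le_compat; nra. }
    pose proof (q1 (x^2) Hy0 Hx2) as Q.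
    assert (E : x - su - su * (gu/3 + gu^2/10) = x^5 * (1/120 + x^2/240 - 53*(x^2)^2/51840 + 49*(x^2)^3/518400 - 49*(x^2)^4/10368000 + (x^2)^5/7776000 - (x^2)^6/622080000)).
    { unfold su, gu. field. }
    assert (0 < x^5 * (1/120 + x^2/240 - 53*(x^2)^2/51840 + 49*(x^2)^3/518400 - 49*(x^2)^4/10368000 + (x^2)^5/7776000 - (x^2)^6/622080000)) by (apply Rmult_lt_0_compat; auto).
    nra.
  - set (sl := x - x^3/6 + x^5/120 - x^7/5040) in *.
    set (gl := x^2/2 - x^4/24 + x^6/720 - x^8/40320).
    assert (Hsl : 0 <= sl).
    { pose proof (sin_lb_ge_0 x) as h. rewrite sin_lb_eq in h. apply h; lra. }
    assert (Hg : gl <= 1 - C) by (unfold gl; lra).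
    assert (Hg0 : 0 <= 1 - C) by (pose proof (COS_bound x); unfold C; lra).
    assert (HB : sl * gl <= S * (1 - C)) by nra.
    pose proof (q3 (x^2) Hy0 Hx2) as Q.
    assert (E : 3/5 * sl * gl - (x - sl) = x^3 * (2/15 - x^2/15 + 23*(x^2)^2/3150 - 17*(x^2)^3/40320 + 29*(x^2)^4/2016000 - (x^2)^5/3456000 + (x^2)^6/338688000)).
    { unfold sl, gl. field. }
    assert (0 < x^3 * (2/15 - x^2/15 + 23*(x^2)^2/3150 - 17*(x^2)^3/40320 + 29*(x^2)^4/2016000 - (x^2)^5/3456000 + (x^2)^6/338688000)) by (apply Rmult_lt_0_compat; auto).
    nra.
Qed.
Definition dd p t := p * (2*t) / (sqrt 21 * (1 + t^2)).
Definition ww p t := - p * (1 - t^2) / (1 + t^2).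
Definition vv p t := (ww p t + 2 * dd p t * (dd p t ^ 2 - 3)) / 3.
Definition HH p M t := 6 * dd p t ^ 2 + 8 * dd p t * vv p t + 6 * vv p t ^ 2 - M.

Lemma sq21 : sqrt 21 * sqrt 21 = 21.
Proof. apply sqrt_sqrt; lra. Qed.
Lemma q21_bounds : 458/100 <= sqrt 21 <= 459/100.
Proof. pose proof sq21. pose proof (sqrt_pos 21). nra. Qed.

Lemma HH0 p M : HH p M 0 = 2/3 * p^2 - M.
Proof. unfold HH, vv, ww, dd. pose proof q21_bounds. field. lra. Qed.

Lemma HH1 p M : HH p M 1 =
  6*(p^2/21) + 16*(p^2/21)*((p^2/21)-3)/3 + 8*(p^2/21)*((p^2/21)-3)^2/3 - M.
Proof.
  pose proof q21_bounds. pose proof sq21.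
  set (q := sqrt 21) in *.
  assert (Hd : dd p 1 = p / q) by (unfold dd; fold q; field; lra).
  assert (Hw : ww p 1 = 0) by (unfold ww; field).
  unfold HH, vv. rewrite Hd, Hw.
  assert (Hz : (p/q)^2 = p^2/21) by (field_simplify; [rewrite <- H0 | lra]; field; lra).
  set (z := p/q) in *. rewrite <- Hz. field.
Qed.

Lemma HHt0 p M : 0 <= p -> 70 <= p^2 <= 126 -> 20 <= M -> HH p M (53/100) < 0.
Proof.
  intros Hp HP HM.
  pose proof q21_bounds. pose proof sq21.
  set (q := sqrt 21) in *.
  set (z := p / q).
  assert (Hz : z^2 = p^2/21) by (unfold z; field_simplify; [rewrite <- H0 | lra]; field; lra).
  assert (Hd : dd p (53/100) = 10600/12809 * z) by (unfold dd, z; fold q; field; lra).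
  assert (Hw : ww p (53/100) = - (7191/12809) * q * z) by (unfold ww, z; field; lra).
  unfold HH, vv. rewrite Hd, Hw.
  set (Z := p^2/21) in *.
  assert (HZ : 10/3 <= Z <= 6) by (unfold Z; lra).
  assert (Hz0 : 0 <= z) by (unfold z; apply Rmult_le_pos; [lra| apply Rlt_le, Rinv_0_lt_compat; lra]).
  set (k := 10600/12809). set (m := 7191/12809).
  assert (E : 6 * (k * z) ^ 2 + 8 * (k * z) * ((- m * q * z + 2 * (k * z) * ((k * z) ^ 2 - 3)) / 3) + 6 * ((- m * q * z + 2 * (k * z) * ((k * z) ^ 2 - 3)) / 3) ^ 2 - M
    = 6*k^2*Z + 16*k^2/3*Z*(k^2*Z-3) + 2/3*(m^2*21*Z + 4*k^2*Z*(k^2*Z-3)^2) - q*(8*k*m/3)*Z*(k^2*Z-2) - M).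
  { rewrite <- Hz. replace (m^2*21) with (m^2*(q*q)) by (rewrite H0; ring). unfold k, m. field. }
  rewrite E.
  assert (HW : 0 <= Z*(k^2*Z-2)) by (unfold k; nra).
  assert (Hq : 458/100*(8*k*m/3)*(Z*(k^2*Z-2)) <= q*(8*k*m/3)*(Z*(k^2*Z-2))).
  { apply Rmult_le_compat_r; [exact HW|]. apply Rmult_le_compat_r; [unfold k, m; lra| lra]. }
  assert (Hc : 6*k^2*Z + 16*k^2/3*Z*(k^2*Z-3) + 2/3*(m^2*21*Z + 4*k^2*Z*(k^2*Z-3)^2) - 458/100*(8*k*m/3)*(Z*(k^2*Z-2)) < 20).
  { unfold k, m. assert (0 <= (Z - 10/3)*(6-Z)) by nra. nra. }
  lra.
Qed.
Lemma ineqs s e : 0 < s <= 1/2 -> 2*s/3 + 2*s^2/5 <= e <= 6*s/5 ->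
  70 <= 105*e/s <= 126 /\ 20 <= 10*(2+e)/(1-s) /\
  10*(2+e)/(1-s) < 2/3 * (105*e/s) /\
  10*(2+e)/(1-s) < 6*((105*e/s)/21) + 16*((105*e/s)/21)*(((105*e/s)/21)-3)/3 + 8*((105*e/s)/21)*(((105*e/s)/21)-3)^2/3.
Proof.
  intros [s0 s1] [e0 e1].
  assert (HD : (105*e/s)/21 = 5*e/s) by (field; lra).
  rewrite HD.
  set (D := 5*e/s).
  assert (HDs : e = D*s/5) by (unfold D; field; lra).
  assert (HP : 105*e/s = 21*D) by (unfold D; field; lra).
  rewrite HP. rewrite HDs in e0, e1.
  assert (D1 : 10/3 + 2*s <= D) by nra.
  assert (D2 : D <= 6) by nra.
  assert (HM : 10*(2+e)/(1-s) = 10*(2+e) * / (1-s)) by reflexivity.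
  assert (Hi : 0 < / (1-s)) by (apply Rinv_0_lt_compat; lra).
  assert (Hi1 : 1 <= / (1-s)).
  { rewrite <- Rinv_1. apply Rinv_le_contravar; lra. }
  assert (Hinv : (1-s) * / (1-s) = 1) by (field; lra).
  rewrite HM.
  split; [lra|]. split; [nra|]. split.
  - rewrite HDs. nra.
  - rewrite HDs. nra.
Qed.
Lemma HHcont p M : continuity (HH p M).
Proof.
  intro t. pose proof q21_bounds.
  unfold HH, vv, ww, dd.
  assert (0 < 1 + t^2) by nra.
  reg.
  all: apply Rgt_not_eq; nra.
Qed.

Lemma param p t : ww p t ^ 2 + 21 * dd p t ^ 2 = p ^ 2.
Proof.
  pose proof q21_bounds. pose proof sq21. unfold ww, dd.
  assert (0 < 1 + t^2) by nra.
  set (q := sqrt 21) in *.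
  replace 21 with (q*q) at 1 by exact H0.
  field. split; nra.
Qed.

Lemma dd_mono p a b : 0 < p -> 0 <= a -> a < b -> b <= 1 -> dd p a < dd p b.
Proof.
  intros Hp Ha Hab Hb. pose proof q21_bounds.
  assert (0 < 1 + a^2) by nra. assert (0 < 1 + b^2) by nra.
  assert (E : dd p b - dd p a = (2*p/sqrt 21) * ((b - a)*(1 - a*b) / ((1+a^2)*(1+b^2)))).
  { unfold dd. field. split; [nra|]. split; nra. }
  assert (0 < (2*p/sqrt 21) * ((b - a)*(1 - a*b) / ((1+a^2)*(1+b^2)))).
  { apply Rmult_lt_0_compat.
    - apply Rdiv_lt_0_compat; lra.
    - assert (a*b < 1) by nra.
      apply Rdiv_lt_0_compat; apply Rmult_lt_0_compat; lra. }
  lra.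
Qed.

Lemma half_facts x : 0 < x <= PI/2 ->
  0 < sin (x/2) /\ 0 < cos (x/2) /\ sin x = 2 * sin (x/2) * cos (x/2) /\
  cos x = 1 - 2 * sin (x/2) ^ 2 /\ sin (x/2) ^ 2 + cos (x/2) ^ 2 = 1.
Proof.
  intros [H0 H1]. pose proof PI_RGT_0.
  split; [apply sin_gt_0; lra|]. split; [apply cos_gt_0; lra|].
  assert (E : x = 2 * (x/2)) by field.
  split; [rewrite E at 1; rewrite sin_2a; ring|].
  split; [rewrite E at 1; rewrite cos_2a_sin; ring|].
  rewrite <- (sin2_cos2 (x/2)). unfold Rsqr. ring.
Qed.

Lemma sol_ok x p M t :
  0 < x <= PI/2 ->
  p ^ 2 = 105 * (x / sin x - 1) / sin (x/2) ^ 2 ->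
  M = 10 * (2 + (x / sin x - 1)) / (1 - sin (x/2) ^ 2) ->
  HH p M t = 0 ->
  is_solution x (dd p t) (cos (x/2) * vv p t).
Proof.
  intros Hx Hp HM HH0.
  destruct (half_facts x Hx) as (Hs & Hc & HS & HC & Hsc).
  assert (HSpos : 0 < sin x) by (rewrite HS; nra).
  unfold HH in HH0.
  assert (Hw : 3 * vv p t - 2 * dd p t * (dd p t ^ 2 - 3) = ww p t) by (unfold vv; field).
  pose proof (param p t) as Hpar.
  set (d := dd p t) in *. set (v := vv p t) in *. set (w := ww p t) in *.
  set (s := sin (x/2)) in *. set (c := cos (x/2)) in *.
  unfold is_solution, eq1, eq2, csc, sec. fold s c.
  rewrite HC.
  assert (Hs2 : s^2 = 1 - c^2) by lra.
  split.
  - assert (E : 3 * (1 + (1 - 2 * s ^ 2)) * d ^ 2 + 8 * c * d * (c * v) + 6 * (c * v) ^ 2 - 10 * (1 + x * / sin x)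
              = c^2 * (6 * d ^ 2 + 8 * d * v + 6 * v ^ 2 - M) + (c^2 * M - 10 * (1 + x * / sin x))).
    { rewrite Hs2. ring. }
    rewrite E. rewrite HH0. rewrite HM. rewrite Hs2. field. repeat split; try lra; nra.
  - assert (E : 4 * d ^ 6 - 24 * d ^ 4 + 57 * d ^ 2 - 12 * / c * d * (d ^ 2 - 3) * (c * v) +
       9 * (/ c) ^ 2 * (c * v) ^ 2 + 105 * (/ s) ^ 2 * (1 - x * / sin x)
       = (3 * v - 2 * d * (d ^ 2 - 3))^2 + 21 * d^2 - 105 * (x / sin x - 1) / s ^ 2).
    { field. repeat split; try lra; nra. }
    rewrite E, Hw, <- Hp. lra.
Qed.

Theorem lemma4 (alpha : R) (Ha : 0 < alpha <= PI / 2) :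
  exists d1 u1 d2 u2 : R,
    (d1, u1) <> (d2, u2) /\
    0 < d1 /\ is_solution alpha d1 u1 /\
    0 < d2 /\ is_solution alpha d2 u2.
Proof.
  destruct (taylor alpha Ha) as (Hx2 & HS & HC & T1 & T3).
  destruct (half_facts alpha Ha) as (Hs & Hc & HSe & HCe & Hsc).
  set (S := sin alpha) in *. set (C := cos alpha) in *.
  set (s := sin (alpha/2)) in *. set (c := cos (alpha/2)) in *.
  set (e := alpha / S - 1).
  set (sg := s^2).
  assert (HeS : e * S = alpha - S) by (unfold e; field; lra).
  assert (Hg : 1 - C = 2 * sg) by (unfold sg; lra).
  rewrite Hg in T1, T3.
  assert (Hsg0 : 0 < sg) by (unfold sg; nra).
  assert (Hsg1 : sg <= 1/2) by lra.
  assert (He1 : 2*sg/3 + 2*sg^2/5 <= e).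
  { apply (Rmult_le_reg_r S); [lra|]. rewrite HeS. nra. }
  assert (He2 : e <= 6*sg/5).
  { apply (Rmult_le_reg_r S); [lra|]. rewrite HeS. nra. }
  destruct (ineqs sg e (conj Hsg0 Hsg1) (conj He1 He2)) as (HP & HM20 & HI1 & HI3).
  set (P := 105*e/sg) in *. set (M := 10*(2+e)/(1-sg)) in *.
  set (p := sqrt P).
  assert (Hp2 : p^2 = P) by (unfold p; simpl; rewrite Rmult_1_r; apply sqrt_sqrt; lra).
  assert (Hp0 : 0 < p) by (unfold p; apply sqrt_lt_R0; lra).
  assert (H0 : 0 < HH p M 0) by (rewrite HH0, Hp2; lra).
  assert (H1 : 0 < HH p M 1) by (rewrite HH1, Hp2; lra).
  assert (Ht : HH p M (53/100) < 0) by (apply HHt0; lra).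
  destruct (IVT_cor (HH p M) 0 (53/100) (HHcont p M)) as [t1 [Ht1 Z1]]; [lra| nra |].
  destruct (IVT_cor (HH p M) (53/100) 1 (HHcont p M)) as [t2 [Ht2 Z2]]; [lra| nra |].
  assert (t1 <> 0) by (intro E; rewrite E in Z1; lra).
  assert (t1 <> 53/100) by (intro E; rewrite E in Z1; lra).
  assert (t2 <> 53/100) by (intro E; rewrite E in Z2; lra).
  assert (Hmono : dd p t1 < dd p t2) by (apply dd_mono; lra).
  assert (Hd1 : 0 < dd p t1).
  { pose proof (dd_mono p 0 t1 Hp0 ltac:(lra) ltac:(lra) ltac:(lra)).
    unfold dd at 1 in H4. replace (p * (2*0) / (sqrt 21 * (1 + 0^2))) with 0 in H4 by (field; pose proof q21_bounds; lra). lra. }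
  assert (HPdef : p ^ 2 = 105 * (alpha / sin alpha - 1) / sin (alpha/2) ^ 2) by (rewrite Hp2; reflexivity).
  assert (HMdef : M = 10 * (2 + (alpha / sin alpha - 1)) / (1 - sin (alpha/2) ^ 2)) by reflexivity.
  exists (dd p t1), (c * vv p t1), (dd p t2), (c * vv p t2).
  split; [intro E; injection E; intros; lra|].
  split; [exact Hd1|]. split; [apply sol_ok with M; auto|].
  split; [lra|]. apply sol_ok with M; auto.
Qed.
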